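(* Let $n\ge1$, $p=\tfrac12(n+1)$, $N\ge0$ an integer, $a\in\mathbb{C}$, and let $\mu$ be a partition with $\mu\subset(N^n)$ (i.e. $\ell(\mu)\le n$ and $\mu_1\le N$). Define $\hat\mu$ by $\hat\mu_i=N-\mu_{n+1-i}$ ($1\le i\le n$). Then $$(a)_{\hat\mu}\,(-a-N+p)_\mu=(-1)^{|\mu|}\,(a)_{(N^n)}.$$
   Context: For a partition $\lambda$ of length $\le n$, $(a)_\lambda=\prod_{i=1}^n\big(a-\tfrac12(i-1)\big)_{\lambda_i}$, where $(c)_r=c(c+1)\cdots(c+r-1)$. $(N^n)$ is the partition with $n$ parts all equal to $N$. *)

(* Defs.v *)
From HB Require Import structures.
From mathcomp Require Import all_boot all_order all_algebra.
From mathcomp Require Import reals complex.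
Set Implicit Arguments. Unset Strict Implicit. Unset Printing Implicit Defensive.
Import Order.TTheory GRing.Theory Num.Theory.
Local Open Scope ring_scope.

Definition rising (F : comRingType) (c : F) (r : nat) : F :=
  \prod_(k < r) (c + k%:R).

(* A partition is a nonincreasing finite sequence of positive integers
   lambda = [:: lambda_1; lambda_2; ...]; lambda_i = nth 0 lambda (i-1),
   with lambda_i = 0 beyond its length. *)
Definition is_partition (lam : seq nat) : bool :=
  sorted geq lam && all (fun x => 0 < x)%N lam.

Definition gpoch (F : fieldType) (n : nat) (a : F) (lam : seq nat) : F :=
  \prod_(i < n) rising (a - i%:R / 2) (nth 0%N lam i).

Definition rect (N n : nat) : seq nat := nseq n N.

(* hat mu_i = N - mu_{n+1-i}, 1 <= i <= n (0-indexed: i |-> N - mu_{n-1-i}) *)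
Definition hatp (N n : nat) (mu : seq nat) : seq nat :=
  mkseq (fun i => N - nth 0 mu (n.-1 - i))%N n.

(* Main.v *)
Require Import Defs.
From mathcomp Require Import all_boot all_order all_algebra.
From mathcomp Require Import reals complex.
From mathcomp Require Import ring zify.
Import Order.TTheory GRing.Theory Num.Theory.
Local Open Scope ring_scope.

Lemma rising_add (F : comRingType) (c : F) k m :
  rising c (k + m) = rising c k * rising (c + k%:R) m.
Proof.
rewrite /rising big_split_ord /=; congr (_ * _).
by apply: eq_bigr => i _; rewrite /= natrD addrA.
Qed.

Lemma rising_neg (F : comRingType) (c : F) m :
  rising (- c - m%:R + 1) m = (-1) ^+ m * rising c m.
Proof.
rewrite /rising (reindex_inj rev_ord_inj) /=.
rewrite (eq_bigr (fun i : 'I_m => - (c + (i : nat)%:R))); last first.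
  move=> i _ /=.
  have h : (m - i.+1 + i.+1 = m)%N by rewrite subnK.
  rewrite -{1}h natrD -addn1 natrD; ring.
by rewrite prodrN card_ord.
Qed.

Lemma key (F : comRingType) (b : F) m N : (m <= N)%N ->
  rising b (N - m) * rising (- b - N%:R + 1) m = (-1) ^+ m * rising b N.
Proof.
move=> le; have e : N = (N - m + m)%N by rewrite subnK.
rewrite {2 3}e rising_add natrD.
have -> : - b - ((N - m)%:R + m%:R) + 1 = - (b + (N - m)%:R) - m%:R + 1 by ring.
rewrite rising_neg; ring.
Qed.

Lemma sumn_nth (s : seq nat) n : (size s <= n)%N ->
  sumn s = (\sum_(i < n) nth 0 s i)%N.
Proof.
elim: n s => [|n IH] s.
  by case: s => //= _; rewrite big_ord0.
case: s => [|x s] /= hs.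
  by rewrite big1 // => i _; rewrite nth_nil.
by rewrite big_ord_recl /= (IH s hs).
Qed.

Theorem mainTheorem9 (R : realType) (n N : nat) (a : R[i]) (mu : seq nat) :
  (1 <= n)%N ->
  is_partition mu -> (size mu <= n)%N -> (nth 0 mu 0 <= N)%N ->
  let p : R[i] := (n + 1)%:R / 2 in
  gpoch n a (hatp N n mu) * gpoch n (- a - N%:R + p) mu
  = (-1) ^+ (sumn mu) * gpoch n a (rect N n).
Proof.
move=> n1 /andP[srt _] smu h0 p.
have bnd : forall i, (nth 0 mu i <= N)%N.
  case: mu srt h0 {smu} => [|x s] //= srt h0 i; first by rewrite nth_nil.
  case: i => [|i] //=.
  case: (ltnP i (size s)) => hi; last by rewrite nth_default.
  have := order_path_min (fun y x z (h1 : geq x y) (h2 : geq y z) => leq_trans h2 h1) srt.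
  move/allP/(_ _ (mem_nth 0 hi)) => /= H; exact: leq_trans H h0.
rewrite /gpoch [X in _ * X = _](reindex_inj rev_ord_inj) /= -big_split /=.
rewrite (@sumn_nth mu n smu) [X in _ ^+ X](reindex_inj rev_ord_inj) /= -prodrXr -big_split /=.
apply: eq_bigr => i _.
rewrite /hatp /rect nth_mkseq //= nth_nseq ltn_ord.
have -> : (n.-1 - i = n - i.+1)%N by lia.
have -> : - a - N%:R + p - (n - i.+1)%:R / 2 = - (a - i%:R / 2) - N%:R + 1.
  rewrite /p.
  have h : (n - i.+1 + i.+1 = n)%N by rewrite subnK.
  rewrite -{1}h !natrD -addn1 natrD; by field.
exact: (@key _ _ _ _ (bnd _)).
Qed.
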